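(* Let $k,l\ge1$ with $k\ne l$, $1\le r\le4kl$, and let $\overline{\mathcal{B}}(2k,2l;r)$ be the set of boards in $\mathcal{B}(2k,2l;r)$ whose board partition $(\lambda_1,\lambda_2,\lambda_3,\lambda_4)$ satisfies: $\lambda_1\ge\lambda_i$ for all $i>1$; if $\lambda_1=\lambda_2$ then $\lambda_3\ge\lambda_4$; if $\lambda_1=\lambda_3$ then $\lambda_2\ge\lambda_4$; if $\lambda_1=\lambda_4$ then $\lambda_2\ge\lambda_3$. For a board partition of a board in $\overline{\mathcal{B}}(2k,2l;r)$, let $K\le\langle H,V\rangle$ be the subgroup of symmetries preserving the set of all boards with that board partition. Then: if $\lambda_1=\lambda_2=\lambda_3=\lambda_4$, $K=\langle H,V\rangle$ and $[\langle H,V\rangle:K]=1$; if $\lambda_1=\lambda_2>\lambda_3=\lambda_4$, $K=\langle V\rangle$ and the index is 2; if $\lambda_1=\lambda_3>\lambda_2=\lambda_4$, $K=\langle R_{180}\rangle$ and the index is 2; if $\lambda_1=\lambda_4>\lambda_2=\lambda_3$, $K=\langle H\rangle$ and the index is 2; in all other cases $K$ is trivial and the index is 4.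
   Context: A $2k\times2l$ grid ($2k$ rows numbered top to bottom, $2l$ columns left to right); $\mathcal{B}(2k,2l;r)$ is the set of boards, i.e. subsets of exactly $r$ blocked cells. $\langle H,V\rangle=\{R_0,H,V,R_{180}\}$ acts on boards, where $H$ is reflection across the horizontal midline (swapping top and bottom), $V$ reflection across the vertical midline (swapping left and right), $R_{180}$ the 180-degree rotation. Quadrants: $Q_1$ = rows $1..k$, cols $1..l$; $Q_2$ = rows $1..k$, cols $l+1..2l$; $Q_3$ = rows $k+1..2k$, cols $l+1..2l$; $Q_4$ = rows $k+1..2k$, cols $1..l$; the board partition is $(\lambda_1,\dots,\lambda_4)$ with $\lambda_i$ the number of blocked cells in $Q_i$. *)

(* Defs.v *)
From mathcomp Require Import all_boot all_fingroup.
Set Implicit Arguments. Unset Strict Implicit. Unset Printing Implicit Defensive.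
Import GroupScope.

(* Cells of the 2k x 2l grid; rows and columns are 0-indexed:
   row i : 'I_(2k) corresponds to paper row i+1, column j to paper column j+1. *)
Definition cell (k l : nat) := ('I_(2 * k) * 'I_(2 * l))%type.

Definition hflip k l (c : cell k l) : cell k l := (rev_ord c.1, c.2).
Definition vflip k l (c : cell k l) : cell k l := (c.1, rev_ord c.2).

Lemma hflip_inj k l : injective (@hflip k l).
Proof. move=> [a b] [c d] /(congr1 (fun x => (rev_ord x.1, x.2))) /=.
by rewrite !rev_ordK. Qed.
Lemma vflip_inj k l : injective (@vflip k l).
Proof. move=> [a b] [c d] /(congr1 (fun x => (x.1, rev_ord x.2))) /=.
by rewrite !rev_ordK. Qed.

Definition Hs k l : {perm cell k l} := perm (@hflip_inj k l).
Definition Vs k l : {perm cell k l} := perm (@vflip_inj k l).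
Definition R180 k l : {perm cell k l} := Hs k l * Vs k l.

Definition HV k l : {set {perm cell k l}} := <<[set Hs k l; Vs k l]>>.

(* A board: a set of blocked cells. B(2k,2l;r) = boards with exactly r cells. *)
Definition board k l := {set cell k l}.
Definition is_board k l r (B : board k l) : bool := #|B| == r.

Definition act_board k l (g : {perm cell k l}) (B : board k l) : board k l :=
  [set g c | c in B].

Definition Q1 k l : {set cell k l} := [set c : cell k l | (c.1 < k)%N && (c.2 < l)%N].
Definition Q2 k l : {set cell k l} := [set c : cell k l | (c.1 < k)%N && (l <= c.2)%N].
Definition Q3 k l : {set cell k l} := [set c : cell k l | (k <= c.1)%N && (l <= c.2)%N].
Definition Q4 k l : {set cell k l} := [set c : cell k l | (k <= c.1)%N && (c.2 < l)%N].

Definition board_partition k l (B : board k l) : nat * nat * nat * nat :=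
  (#|B :&: Q1 k l|, #|B :&: Q2 k l|, #|B :&: Q3 k l|, #|B :&: Q4 k l|).

Definition normalized_partition (p : nat * nat * nat * nat) : bool :=
  let: (l1, l2, l3, l4) := p in
  [&& (l2 <= l1)%N, (l3 <= l1)%N, (l4 <= l1)%N,
      (l1 == l2) ==> (l4 <= l3)%N,
      (l1 == l3) ==> (l4 <= l2)%N &
      (l1 == l4) ==> (l3 <= l2)%N].

Definition in_Bbar k l r (B : board k l) : bool :=
  is_board r B && normalized_partition (board_partition B).

Definition boards_with_partition k l (p : nat * nat * nat * nat) : {set board k l} :=
  [set B : board k l | board_partition B == p].

Definition Kstab k l (p : nat * nat * nat * nat) : {set {perm cell k l}} :=
  [set g in HV k l |
     [set act_board g B | B in boards_with_partition k l p]
       == boards_with_partition k l p].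

(* Main.v *)
Require Import Defs.
From mathcomp Require Import all_boot all_fingroup zify.
Import GroupScope.

Section H.
Variables k l : nat.
Local Notation H := (Hs k l).
Local Notation V := (Vs k l).
Local Notation R := (R180 k l).

Ltac pext := apply/permP => -[a b]; rewrite ?/R180 !(permM, permE) /hflip /vflip /= ?rev_ordK.

Lemma HH : H * H = 1. Proof. by pext. Qed.
Lemma VV : V * V = 1. Proof. by pext. Qed.
Lemma VH : V * H = R. Proof. by pext. Qed.
Lemma HR : H * R = V. Proof. by pext. Qed.
Lemma RH : R * H = V. Proof. by pext. Qed.
Lemma VR : V * R = H. Proof. by pext. Qed.
Lemma RV : R * V = H. Proof. by pext. Qed.
Lemma RR : R * R = 1. Proof. by pext. Qed.

Definition S4 : {set {perm cell k l}} := [set 1; H; V; R].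

Lemma S4_group : group_set S4.
Proof.
apply/andP; split; first by rewrite !inE eqxx.
apply/subsetP => _ /mulsgP[x y xin yin ->].
move: xin yin; rewrite !inE.
rewrite -!orbA => A B.
by case/or4P: A => /eqP ->; case/or4P: B => /eqP ->;
  rewrite ?mul1g ?mulg1 ?HH ?VV ?VH ?HR ?RH ?VR ?RV ?RR /R180 ?eqxx ?orbT.
Qed.

Lemma HV_S4 : HV k l = S4.
Proof.
apply/eqP; rewrite eqEsubset; apply/andP; split.
  have -> : S4 = Group S4_group by [].
  by rewrite gen_subG; apply/subsetP => x; rewrite !inE => /orP[] /eqP ->; rewrite eqxx ?orbT.
apply/subsetP => x; rewrite !inE -!orbA => /or4P[] /eqP ->.
- exact: group1.
- by apply: mem_gen; rewrite !inE eqxx.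
- by apply: mem_gen; rewrite !inE eqxx orbT.
- by rewrite /R180; apply: groupM; apply: mem_gen; rewrite !inE eqxx ?orbT.
Qed.
End H.

Section H2.
Variables k l : nat.
Hypotheses (hk : (1 <= k)%N) (hl : (1 <= l)%N).
Local Notation H := (Hs k l).
Local Notation V := (Vs k l).
Local Notation R := (R180 k l).

Lemma k2 : (0 < 2 * k)%N. Proof. lia. Qed.
Lemma l2 : (0 < 2 * l)%N. Proof. lia. Qed.
Let i0 : 'I_(2 * k) := Ordinal k2.
Let j0 : 'I_(2 * l) := Ordinal l2.

Lemma H1 : H != 1.
Proof. apply/eqP => /permP /(_ (i0, j0)); rewrite perm1 permE /hflip /= => -[]; lia. Qed.
Lemma V1 : V != 1.
Proof. apply/eqP => /permP /(_ (i0, j0)); rewrite perm1 permE /vflip /= => -[]; lia. Qed.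
Lemma HVn : H != V.
Proof. apply/eqP => /permP /(_ (i0, j0)); rewrite !permE /hflip /vflip /= => -[]; lia. Qed.
Lemma R1 : R != 1.
Proof. apply/eqP => /permP /(_ (i0, j0)); rewrite /R180 perm1 permM !permE /hflip /vflip /= => -[]; lia. Qed.
Lemma RHn : R != H.
Proof. apply/eqP => /permP /(_ (i0, j0)); rewrite /R180 permM !permE /hflip /vflip /= => -[]; lia. Qed.
Lemma RVn : R != V.
Proof. apply/eqP => /permP /(_ (i0, j0)); rewrite /R180 permM !permE /hflip /vflip /= => -[]; lia. Qed.

Lemma card_S4 : #|S4 k l| = 4%N.
Proof.
have -> : S4 k l = 1 |: (H |: (V |: [set R])).
  by apply/setP => x; rewrite !inE -!orbA.
rewrite !cardsU1 cards1 !inE.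
by rewrite !(eq_sym 1) (eq_sym V R) (eq_sym H R) (negbTE H1) (negbTE V1) (negbTE R1)
  (negbTE HVn) (negbTE RHn) (negbTE RVn).
Qed.
End H2.

Lemma cycle_inv (gT : finGroupType) (x : gT) : x * x = 1 -> <[x]> = [set 1; x].
Proof.
move=> xx; apply/setP => y; rewrite !inE; apply/cycleP/orP.
  move=> [i ->]; rewrite -(@expg_mod _ 2); last by rewrite expgS expg1.
  by rewrite modn2; case: (odd i); rewrite ?expg1 ?expg0 eqxx; auto.
by case=> /eqP ->; [exists 0%N | exists 1%N]; rewrite ?expg0 ?expg1.
Qed.

Lemma card_imsetI (T : finType) (s : {perm T}) (X A C : {set T}) :
  (forall c, (s c \in A) = (c \in C)) -> #|(s @: X) :&: A| = #|X :&: C|.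
Proof.
move=> hs; have -> : s @: X :&: A = s @: (X :&: C).
  apply/setP => c; rewrite -[c](permKV s) inE !mem_imset; try exact: perm_inj.
  by rewrite inE hs.
by rewrite card_imset //; exact: perm_inj.
Qed.

Arguments card_imsetI {T s X A C}.

Section Q.
Variables k l : nat.
Local Notation H := (Hs k l).
Local Notation V := (Vs k l).
Local Notation R := (R180 k l).

Ltac qt c := case: c => a b; rewrite ?permE /hflip /vflip !inE /=;
  have := ltn_ord a; have := ltn_ord b; lia.

Lemma HQ1 c : (H c \in Q1 k l) = (c \in Q4 k l). Proof. qt c. Qed.
Lemma HQ2 c : (H c \in Q2 k l) = (c \in Q3 k l). Proof. qt c. Qed.
Lemma HQ3 c : (H c \in Q3 k l) = (c \in Q2 k l). Proof. qt c. Qed.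
Lemma HQ4 c : (H c \in Q4 k l) = (c \in Q1 k l). Proof. qt c. Qed.
Lemma VQ1 c : (V c \in Q1 k l) = (c \in Q2 k l). Proof. qt c. Qed.
Lemma VQ2 c : (V c \in Q2 k l) = (c \in Q1 k l). Proof. qt c. Qed.
Lemma VQ3 c : (V c \in Q3 k l) = (c \in Q4 k l). Proof. qt c. Qed.
Lemma VQ4 c : (V c \in Q4 k l) = (c \in Q3 k l). Proof. qt c. Qed.
Lemma RQ1 c : (R c \in Q1 k l) = (c \in Q3 k l). Proof. by rewrite /R180 permM VQ1 HQ2. Qed.
Lemma RQ2 c : (R c \in Q2 k l) = (c \in Q4 k l). Proof. by rewrite /R180 permM VQ2 HQ1. Qed.
Lemma RQ3 c : (R c \in Q3 k l) = (c \in Q1 k l). Proof. by rewrite /R180 permM VQ3 HQ4. Qed.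
Lemma RQ4 c : (R c \in Q4 k l) = (c \in Q2 k l). Proof. by rewrite /R180 permM VQ4 HQ3. Qed.

Definition sH (p : nat * nat * nat * nat) := let: (a, b, c, d) := p in (d, c, b, a).
Definition sV (p : nat * nat * nat * nat) := let: (a, b, c, d) := p in (b, a, d, c).
Definition sR (p : nat * nat * nat * nat) := let: (a, b, c, d) := p in (c, d, a, b).

Lemma partH B : board_partition (act_board H B) = sH (board_partition B).
Proof. by rewrite /board_partition /act_board /= (card_imsetI HQ1) (card_imsetI HQ2) (card_imsetI HQ3) (card_imsetI HQ4). Qed.
Lemma partV B : board_partition (act_board V B) = sV (board_partition B).
Proof. by rewrite /board_partition /act_board /= (card_imsetI VQ1) (card_imsetI VQ2) (card_imsetI VQ3) (card_imsetI VQ4). Qed.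
Lemma partR B : board_partition (act_board R B) = sR (board_partition B).
Proof. by rewrite /board_partition /act_board /= (card_imsetI RQ1) (card_imsetI RQ2) (card_imsetI RQ3) (card_imsetI RQ4). Qed.
Lemma part1 (B : board k l) : board_partition (act_board 1 B) = board_partition B.
Proof. congr (@board_partition k l); apply/setP => c; rewrite /act_board.
by rewrite -{1}[c]perm1 mem_imset //; exact: perm_inj. Qed.

Lemma act_inv (g : {perm cell k l}) (B : board k l) : g * g = 1 -> act_board g (act_board g B) = B.
Proof.
move=> gg; rewrite /act_board -imset_comp.
apply/setP => c; rewrite -{1}[c]perm1 -gg permM.
by rewrite (mem_imset (f := g \o g)) // => x y /= /perm_inj /perm_inj.
Qed.

Lemma Kstab_gen (g : {perm cell k l}) (s : nat * nat * nat * nat -> nat * nat * nat * nat)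
  p (B0 : board k l) : g * g = 1 -> involutive s ->
  (forall B, board_partition (act_board g B) = s (board_partition B)) ->
  board_partition B0 = p ->
  ([set act_board g B | B in boards_with_partition k l p]
       == boards_with_partition k l p) = (s p == p).
Proof.
move=> gg si hp hB0.
have -> : [set act_board g B | B in boards_with_partition k l p] =
          boards_with_partition k l (s p).
  apply/setP => X; rewrite inE; apply/imsetP/eqP.
    by move=> [B]; rewrite inE => /eqP <- ->; rewrite hp.
  move=> hX; exists (act_board g X); last by rewrite act_inv.
  by rewrite inE hp hX si.
apply/eqP/eqP => [E|->//].
have : B0 \in boards_with_partition k l (s p) by rewrite E inE hB0.
by rewrite inE hB0 => /eqP.
Qed.
End Q.

Theorem corollary4p6 (k l r : nat) :
  (1 <= k)%N -> (1 <= l)%N -> k <> l -> (1 <= r <= 4 * k * l)%N ->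
  forall B : board k l, in_Bbar r B ->
  forall l1 l2 l3 l4 : nat, board_partition B = (l1, l2, l3, l4) ->
  let K := Kstab k l (l1, l2, l3, l4) in
  let G := HV k l in
  [/\ (l1 = l2 /\ l2 = l3 /\ l3 = l4) ->
        K = G /\ #|G : K| = 1%N,
      (l1 = l2 /\ (l2 > l3)%N /\ l3 = l4) ->
        K = <[Vs k l]> /\ #|G : K| = 2%N,
      (l1 = l3 /\ (l3 > l2)%N /\ l2 = l4) ->
        K = <[R180 k l]> /\ #|G : K| = 2%N,
      (l1 = l4 /\ (l4 > l2)%N /\ l2 = l3) ->
        K = <[Hs k l]> /\ #|G : K| = 2%N &
      (~ (l1 = l2 /\ l2 = l3 /\ l3 = l4) /\
       ~ (l1 = l2 /\ (l2 > l3)%N /\ l3 = l4) /\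
       ~ (l1 = l3 /\ (l3 > l2)%N /\ l2 = l4) /\
       ~ (l1 = l4 /\ (l4 > l2)%N /\ l2 = l3)) ->
        K = 1 /\ #|G : K| = 4%N].

Proof.
move=> hk hl _ _ B hB l1 l2 l3 l4 hp K G.
move: hB; rewrite /in_Bbar hp => /andP[_] /= /and4P[n2 n3 n4 /and3P[i2 i3 i4]].
have j2 : l1 = l2 -> (l4 <= l3)%N by move=> E; apply: (implyP i2); apply/eqP.
have j3 : l1 = l3 -> (l4 <= l2)%N by move=> E; apply: (implyP i3); apply/eqP.
have j4 : l1 = l4 -> (l3 <= l2)%N by move=> E; apply: (implyP i4); apply/eqP.
set p := (l1, l2, l3, l4).
have Kmem : forall x, (x \in K) = [|| x == 1, (x == Hs k l) && (sH p == p),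
    (x == Vs k l) && (sV p == p) | (x == R180 k l) && (sR p == p)].
  move=> x; rewrite /K /Kstab inE HV_S4 /S4 !inE -!orbA !andb_orl.
  congr [|| _, _, _ | _]; case: eqP => // ->.
  - by rewrite (@Kstab_gen k l 1 id p B) ?mulg1 ?eqxx //; move=> C; rewrite part1.
  - by rewrite (@Kstab_gen k l _ (@sH) p B) //; [exact: HH | by case=> [[[]]] | exact: partH].
  - by rewrite (@Kstab_gen k l _ (@sV) p B) //; [exact: VV | by case=> [[[]]] | exact: partV].
  - by rewrite (@Kstab_gen k l _ (@sR) p B) //; [exact: RR | by case=> [[[]]] | exact: partR].
have eH : (sH p == p) = [&& l1 == l4 & l2 == l3].
  by rewrite /= !xpair_eqE; do ![case: eqP => ?] => //=; lia.
have eV : (sV p == p) = [&& l1 == l2 & l3 == l4].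
  by rewrite /= !xpair_eqE; do ![case: eqP => ?] => //=; lia.
have eR : (sR p == p) = [&& l1 == l3 & l2 == l4].
  by rewrite /= !xpair_eqE; do ![case: eqP => ?] => //=; lia.
have cG : #|G| = 4%N by rewrite /G HV_S4 card_S4.
have cyc2 : forall x : {perm cell k l}, x * x = 1 -> x != 1 -> x \in G ->
    #|<[x]>| = 2%N /\ #|G : <[x]>| = 2%N.
  move=> x xx x1 xG; have c2 : #|<[x]>| = 2%N by rewrite cycle_inv // cards2 eq_sym x1.
  split=> //; have := Lagrange (G := HV k l) (H := <[x]>%G).
  rewrite cycle_subG c2 -/G cG => /(_ xG) /eqP; rewrite -[4%N]/(2 * 2)%N eqn_mul2l /= => /eqP; exact.
have HG : Hs k l \in G by apply: mem_gen; rewrite !inE eqxx.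
have VG : Vs k l \in G by apply: mem_gen; rewrite !inE eqxx orbT.
have RG : R180 k l \in G by rewrite /G HV_S4 /S4 !inE eqxx orbT.
split.
- move=> [e12 [e23 e34]].
  have KG : K = G.
    apply/setP => x; rewrite Kmem eH eV eR /G HV_S4 /S4 !inE -!orbA.
    have -> : l1 == l4 by apply/eqP; lia.
    have -> : l1 == l2 by apply/eqP; lia.
    have -> : l1 == l3 by apply/eqP; lia.
    have -> : l2 == l3 by apply/eqP; lia.
    have -> : l2 == l4 by apply/eqP; lia.
    have -> : l3 == l4 by apply/eqP; lia.
    by rewrite ?andbT ?andbF ?orbF.
  by split=> //; rewrite KG; exact: indexgg.
- move=> [e12 [g23 e34]].
  have KG : K = <[Vs k l]>.
    apply/setP => x; rewrite Kmem eH eV eR cycle_inv ?VV // !inE.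
    have -> : l1 == l4 = false by apply/negbTE/eqP; lia.
    have -> : l1 == l3 = false by apply/negbTE/eqP; lia.
    have -> : l1 == l2 by apply/eqP; lia.
    have -> : l3 == l4 by apply/eqP; lia.
    by rewrite ?andbT ?andbF ?orbF.
  by rewrite KG; split=> //; case: (cyc2 _ (VV k l) (@V1 k l hk hl) VG).
- move=> [e13 [g32 e24]].
  have KG : K = <[R180 k l]>.
    apply/setP => x; rewrite Kmem eH eV eR cycle_inv ?RR // !inE.
    have -> : l1 == l4 = false by apply/negbTE/eqP; lia.
    have -> : l1 == l2 = false by apply/negbTE/eqP; lia.
    have -> : l1 == l3 by apply/eqP; lia.
    have -> : l2 == l4 by apply/eqP; lia.
    by rewrite ?andbT ?andbF ?orbF.
  by rewrite KG; split=> //; case: (cyc2 _ (RR k l) (@R1 k l hk hl) RG).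
- move=> [e14 [g42 e23]].
  have KG : K = <[Hs k l]>.
    apply/setP => x; rewrite Kmem eH eV eR cycle_inv ?HH // !inE.
    have -> : l1 == l3 = false by apply/negbTE/eqP; lia.
    have -> : l1 == l2 = false by apply/negbTE/eqP; lia.
    have -> : l1 == l4 by apply/eqP; lia.
    have -> : l2 == l3 by apply/eqP; lia.
    by rewrite ?andbT ?andbF ?orbF.
  by rewrite KG; split=> //; case: (cyc2 _ (HH k l) (@H1 k l hk hl) HG).
- move=> [c1 [c2 [c3 c4]]].
  have KG : K = 1.
    apply/setP => x; rewrite Kmem eH eV eR !inE.
    have -> : [&& l1 == l4 & l2 == l3] = false.
      apply/negbTE/andP => -[/eqP e14 /eqP e23]; case: (ltnP l2 l4) => h; [apply: c4 | apply: c1]; clear -e14 e23 h n2 n3 n4; do !split; lia.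
    have -> : [&& l1 == l2 & l3 == l4] = false.
      apply/negbTE/andP => -[/eqP e12 /eqP e34]; case: (ltnP l3 l2) => h; [apply: c2 | apply: c1]; clear -e12 e34 h n2 n3 n4; do !split; lia.
    have -> : [&& l1 == l3 & l2 == l4] = false.
      apply/negbTE/andP => -[/eqP e13 /eqP e24]; case: (ltnP l2 l3) => h; [apply: c3 | apply: c1]; clear -e13 e24 h n2 n3 n4; do !split; lia.
    by rewrite !andbF !orbF.
  by rewrite KG; split=> //; rewrite indexg1.
Qed.
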